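(* Let $M$ be a monoid generated by a finite set $A$, let $H$ be an $\mathcal{H}$-class of $M$, let $G=\mathcal{G}(H)$ be the Schützenberger group of $H$, and let $\Gamma(R,A)$ be the Schützenberger graph of the $\mathcal{R}$-class $R$ containing $H$. Then the left translation action of $G$ on $\Gamma(R,A)$ is by isometries and is outward proper. Moreover, the action is cocompact if and only if $R$ contains only finitely many $\mathcal{H}$-classes.
   Context: Green's relations on a monoid $M$: $x\mathcal{R}y$ iff $xM=yM$; $x\mathcal{L}y$ iff $Mx=My$; $\mathcal{H}=\mathcal{R}\cap\mathcal{L}$. For an $\mathcal{H}$-class $H$, let $\mathrm{Stab}(H)=\{s\in M:sH=H\}$ and $\sigma$ the congruence on it with $x\,\sigma\,y$ iff $xh=yh$ for all $h\in H$; the Schützenberger group is the group $\mathcal{G}(H)=\mathrm{Stab}(H)/\sigma$, acting on the $\mathcal{R}$-class $R\supseteq H$ by $(s/\sigma)\cdot r=sr$. A semimetric space is a set $X$ with $d:X\times X\to\mathbb{R}^{\ge0}\cup\{\infty\}$, $d(x,y)=0$ iff $x=y$, and the triangle inequality (no symmetry). For a directed graph $\Gamma$ with vertex set $V$, edge set $E$, source/target maps $\iota,\tau$, the semimetric space $\Gamma^*$ has point set $V\cup(E\times(0,1))$ with: $d(x,y)$ for vertices the least number of edges in a directed path ($\infty$ if none); $d((e,\mu),y)=(1-\mu)+d(\tau(e),y)$; $d(x,(e,\mu))=d(x,\iota(e))+\mu$; $d((e,\mu),(f,\nu))=\nu-\mu$ if $e=f$, $\nu\ge\mu$, else $d(\tau(e),\iota(f))+(1-\mu)+\nu$.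 The Schützenberger graph $\Gamma(R,A)$ is $\Delta^*$ where $\Delta$ has vertex set $R$ and an edge labelled $a$ from $x$ to $y$ whenever $x,y\in R$, $a\in A$, $xa=y$. The left translation action of $G$ on $\Gamma(R,A)$ sends a vertex $r$ to $gr$, the edge labelled $a$ from $x$ to $xa$ to the edge labelled $a$ from $gx$ to $gxa$, and a point $(e,\mu)$ to $(ge,\mu)$. Out-ball $\overrightarrow{\mathcal{B}}_r(x_0)=\{y:d(x_0,y)\le r\}$, in-ball $\overleftarrow{\mathcal{B}}_r(x_0)=\{y:d(y,x_0)\le r\}$, strong ball $\mathcal{B}_r(x_0)=\overrightarrow{\mathcal{B}}_r(x_0)\cap\overleftarrow{\mathcal{B}}_r(x_0)$. An action by isometries is outward proper if for every out-ball $B$ of finite radius $\{g:B\cap gB\neq\varnothing\}$ is finite, and cocompact if there is a strong ball $B$ of finite radius with $\{gB:g\in G\}$ covering the space. *)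

(* Defs.v *)
From Stdlib Require Import Reals List ClassicalEpsilon.
From Coquelicot Require Import Coquelicot.
Open Scope R_scope.

Record monoid := Monoid {
  mcar :> Type;
  mmul : mcar -> mcar -> mcar;
  mone : mcar;
  mmulA : forall x y z, mmul x (mmul y z) = mmul (mmul x y) z;
  mmul1m : forall x, mmul mone x = x;
  mmulm1 : forall x, mmul x mone = x }.

Section Green.
Variable M : monoid.

Definition generated_by (A : list M) : Prop :=
  forall x : M, exists l : list M,
    (forall a, In a l -> In a A) /\ x = fold_right (mmul M) (mone M) l.

(* Green's relations: x R y iff xM = yM ; x L y iff Mx = My ; H = R /\ L *)
Definition Rrel (x y : M) : Prop :=
  forall z, (exists m, z = mmul M x m) <-> (exists m, z = mmul M y m).
Definition Lrel (x y : M) : Prop :=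
  forall z, (exists m, z = mmul M m x) <-> (exists m, z = mmul M m y).
Definition Hrel (x y : M) : Prop := Rrel x y /\ Lrel x y.

Definition is_Hclass (H : M -> Prop) : Prop :=
  exists h0, forall x, H x <-> Hrel x h0.

Definition Rclass_containing (H Rc : M -> Prop) : Prop :=
  exists h, H h /\ forall x, Rc x <-> Rrel x h.

Definition Stab (H : M -> Prop) (s : M) : Prop :=
  forall z, (exists h, H h /\ z = mmul M s h) <-> H z.

(* the congruence sigma on Stab(H): x sigma y iff xh = yh for all h in H;
   the Schutzenberger group G(H) = Stab(H)/sigma; its elements are
   represented below by elements of Stab(H), two representatives denoting
   the same group element iff they are sigma-related. *)
Definition sigma (H : M -> Prop) (s t : M) : Prop :=
  forall h, H h -> mmul M s h = mmul M t h.

Variables (Rc : M -> Prop) (A : list M).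

(* the edge labelled a from x to xa (edges are determined by (x,a)) *)
Definition edge (x a : M) : Prop := Rc x /\ In a A /\ Rc (mmul M x a).

Inductive walk : M -> M -> nat -> Prop :=
| walk0 x : Rc x -> walk x x 0
| walkS x a y n : edge x a -> walk (mmul M x a) y n -> walk x y (S n).

(* vertex distance: least number of edges of a directed path (+oo if none) *)
Definition dV (x y : M) : Rbar :=
  Glb_Rbar (fun r => exists n, walk x y n /\ r = INR n).

(* points of Delta^* : vertices, and (e, mu) with e the edge (x,a) *)
Inductive point : Type :=
| Vert (x : M)
| Mid (x a : M) (mu : R).

Definition in_space (p : point) : Prop :=
  match p with
  | Vert x => Rc x
  | Mid x a mu => edge x a /\ 0 < mu < 1
  end.

(* the semimetric of Delta^* ; iota(x,a) = x, tau(x,a) = xa *)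
Definition dist (p q : point) : Rbar :=
  match p, q with
  | Vert x, Vert y => dV x y
  | Mid x a mu, Vert y => Rbar_plus (Finite (1 - mu)) (dV (mmul M x a) y)
  | Vert x, Mid y b nu => Rbar_plus (dV x y) (Finite nu)
  | Mid x a mu, Mid y b nu =>
      if excluded_middle_informative (x = y /\ a = b /\ mu <= nu)
      then Finite (nu - mu)
      else Rbar_plus (dV (mmul M x a) y) (Finite (1 - mu + nu))
  end.

(* left translation action of (a representative s of) g in G(H) *)
Definition act (s : M) (p : point) : point :=
  match p with
  | Vert x => Vert (mmul M s x)
  | Mid x a mu => Mid (mmul M s x) a mu
  end.

Definition out_ball (x0 : point) (r : R) (p : point) : Prop :=
  in_space p /\ Rbar_le (dist x0 p) (Finite r).
Definition in_ball (x0 : point) (r : R) (p : point) : Prop :=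
  in_space p /\ Rbar_le (dist p x0) (Finite r).
Definition strong_ball (x0 : point) (r : R) (p : point) : Prop :=
  out_ball x0 r p /\ in_ball x0 r p.

Variable H : M -> Prop.

Definition acts_by_isometries : Prop :=
  forall s, Stab H s -> forall p q, in_space p -> in_space q ->
    in_space (act s p) /\ dist (act s p) (act s q) = dist p q.

(* for every out-ball B of finite radius, { g in G(H) : B meets gB } is finite:
   it is covered by the sigma-classes of finitely many elements of Stab(H) *)
Definition outward_proper : Prop :=
  forall x0 r, in_space x0 -> 0 <= r ->
    exists L : list M, (forall t, In t L -> Stab H t) /\
      forall s, Stab H s ->
        (exists q, out_ball x0 r q /\ out_ball x0 r (act s q)) ->
        exists t, In t L /\ sigma H s t.

Definition cocompact : Prop :=
  exists x0 r, in_space x0 /\ 0 <= r /\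
    forall p, in_space p ->
      exists s, Stab H s /\ exists q, strong_ball x0 r q /\ p = act s q.

Definition finitely_many_Hclasses : Prop :=
  exists L : list M, (forall y, In y L -> Rc y) /\
    forall x, Rc x -> exists y, In y L /\ Hrel x y.

End Green.

(* Main.v *)
Require Import Defs.
From Stdlib Require Import Reals List Lra Lia ZArith Classical ClassicalEpsilon.
From Coquelicot Require Import Coquelicot.
Open Scope R_scope.

Local Notation "x ** y" := (mmul _ x y) (at level 40, left associativity).

Lemma Rrel_fact {M : monoid} (x y : M) :
  Rrel M x y <-> (exists m, x = y ** m) /\ (exists m, y = x ** m).
Proof.
  split.
  - intros HR. split.
    + destruct (proj1 (HR x) (ex_intro _ (mone M) (eq_sym (mmulm1 M x)))) as [m Hm]. exists m; exact Hm.
    + destruct (proj2 (HR y) (ex_intro _ (mone M) (eq_sym (mmulm1 M y)))) as [m Hm]. exists m; exact Hm.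
  - intros [[m1 H1] [m2 H2]] z; split; intros [m Hm].
    + exists (m1 ** m). rewrite Hm, H1, mmulA. reflexivity.
    + exists (m2 ** m). rewrite Hm, H2, mmulA. reflexivity.
Qed.

Lemma Lrel_fact {M : monoid} (x y : M) :
  Lrel M x y <-> (exists m, x = m ** y) /\ (exists m, y = m ** x).
Proof.
  split.
  - intros HR. split.
    + destruct (proj1 (HR x) (ex_intro _ (mone M) (eq_sym (mmul1m M x)))) as [m Hm]. exists m; exact Hm.
    + destruct (proj2 (HR y) (ex_intro _ (mone M) (eq_sym (mmul1m M y)))) as [m Hm]. exists m; exact Hm.
  - intros [[m1 H1] [m2 H2]] z; split; intros [m Hm].
    + exists (m ** m1). rewrite Hm, H1, mmulA. reflexivity.
    + exists (m ** m2). rewrite Hm, H2, mmulA. reflexivity.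
Qed.

Lemma Rrel_refl {M : monoid} (x : M) : Rrel M x x.
Proof. intro z; tauto. Qed.
Lemma Rrel_sym {M : monoid} (x y : M) : Rrel M x y -> Rrel M y x.
Proof. intros Hr z; specialize (Hr z); tauto. Qed.
Lemma Rrel_trans {M : monoid} (x y z : M) : Rrel M x y -> Rrel M y z -> Rrel M x z.
Proof. intros H1 H2 w; specialize (H1 w); specialize (H2 w); tauto. Qed.
Lemma Lrel_refl {M : monoid} (x : M) : Lrel M x x.
Proof. intro z; tauto. Qed.
Lemma Lrel_sym {M : monoid} (x y : M) : Lrel M x y -> Lrel M y x.
Proof. intros Hr z; specialize (Hr z); tauto. Qed.
Lemma Lrel_trans {M : monoid} (x y z : M) : Lrel M x y -> Lrel M y z -> Lrel M x z.
Proof. intros H1 H2 w; specialize (H1 w); specialize (H2 w); tauto. Qed.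

Lemma Lrel_rcong {M : monoid} (x y n : M) : Lrel M x y -> Lrel M (x ** n) (y ** n).
Proof.
  intros HL. apply Lrel_fact in HL. destruct HL as [[q1 H1] [q2 H2]].
  apply Lrel_fact. split.
  - exists q1. rewrite H1, mmulA. reflexivity.
  - exists q2. rewrite H2, mmulA. reflexivity.
Qed.

Lemma left_preserves {M : monoid} (Rc : M -> Prop) (h p c z : M) :
  (forall x, Rc x <-> Rrel M x h) -> Rc c -> Rc (p ** c) -> Rc z -> Rc (p ** z).
Proof.
  intros HR Hc Hpc Hz. apply HR in Hc, Hpc, Hz. apply HR.
  assert (Hzc : Rrel M z c) by (eapply Rrel_trans; [exact Hz | apply Rrel_sym; exact Hc]).
  apply Rrel_fact in Hzc. destruct Hzc as [[j Hj] [k Hk]].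
  eapply Rrel_trans; [| exact Hpc].
  apply Rrel_fact. split.
  - exists j. rewrite Hj, mmulA. reflexivity.
  - exists k. rewrite Hk at 1. rewrite mmulA. reflexivity.
Qed.

Lemma Stab_props {M : monoid} (H Rc : M -> Prop) (h s : M) :
  (forall x, H x <-> Hrel M x h) -> (forall x, Rc x <-> Rrel M x h) ->
  Stab M H s ->
  exists u, (forall z, Rc z -> Rc (s ** z)) /\ (forall z, Rc z -> Rc (u ** z)) /\
    (forall m, u ** (s ** (h ** m)) = h ** m) /\ (forall z, Rc z -> u ** (s ** z) = z)
    /\ Rc h.
Proof.
  intros HH HR Hs.
  assert (Hh : H h) by (apply HH; split; [apply Rrel_refl | apply Lrel_refl]).
  assert (Hsh : H (s ** h)) by (apply Hs; exists h; split; auto).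
  apply HH in Hsh. destruct Hsh as [HshR HshL].
  apply Lrel_fact in HshL. destruct HshL as [_ [u Hu]].
  assert (Rch : Rc h) by (apply HR; apply Rrel_refl).
  assert (Rcsh : Rc (s ** h)) by (apply HR; exact HshR).
  assert (Hum : forall m, u ** (s ** (h ** m)) = h ** m).
  { intro m. rewrite (mmulA _ s h m), mmulA, <- Hu. reflexivity. }
  exists u. split; [| split; [| split; [exact Hum | split]]].
  - intros z Hz. apply (left_preserves Rc h s h z HR Rch Rcsh Hz).
  - intros z Hz. apply (left_preserves Rc h u (s ** h) z HR Rcsh); [rewrite <- Hu; exact Rch | exact Hz].
  - intros z Hz. apply HR in Hz. apply Rrel_fact in Hz. destruct Hz as [[m Hm] _].
    rewrite Hm. apply Hum.
  - exact Rch.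
Qed.

Lemma walk_map {M : monoid} (Rc : M -> Prop) (A : list M) (p : M) :
  (forall z, Rc z -> Rc (p ** z)) ->
  forall x y n, walk M Rc A x y n -> walk M Rc A (p ** x) (p ** y) n.
Proof.
  intros Hp x y n W. induction W as [x Hx | x a y n [Hx [Ha Hxa]] W IH].
  - constructor. auto.
  - apply walkS with a.
    + split; [auto | split; [exact Ha |]]. rewrite <- mmulA. auto.
    + rewrite <- mmulA. exact IH.
Qed.

Lemma dV_eq {M : monoid} (Rc : M -> Prop) (A : list M) (s u : M) :
  (forall z, Rc z -> Rc (s ** z)) -> (forall z, Rc z -> Rc (u ** z)) ->
  (forall z, Rc z -> u ** (s ** z) = z) ->
  forall x y, Rc x -> Rc y -> dV M Rc A (s ** x) (s ** y) = dV M Rc A x y.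
Proof.
  intros Hs Hu Hus x y Hx Hy. unfold dV. apply Glb_Rbar_eqset. intro r. split.
  - intros [n [W ->]]. exists n. split; auto.
    apply (walk_map Rc A u Hu) in W. rewrite !Hus in W; auto.
  - intros [n [W ->]]. exists n. split; auto. apply (walk_map Rc A s Hs). exact W.
Qed.

Lemma isometry_part {M : monoid} (A : list M) (H Rc : M -> Prop) (h : M) :
  (forall x, H x <-> Hrel M x h) -> (forall x, Rc x <-> Rrel M x h) ->
  acts_by_isometries M Rc A H.
Proof.
  intros HH HR s Hst p q Hp Hq.
  destruct (Stab_props H Rc h s HH HR Hst) as [u [Hs [Hu [_ [Hus _]]]]].
  assert (inj : forall x y, Rc x -> Rc y -> s ** x = s ** y -> x = y).
  { intros x y Hx Hy E. rewrite <- (Hus x Hx), <- (Hus y Hy), E. reflexivity. }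
  destruct p as [x | x a mu]; destruct q as [y | y b nu]; simpl in Hp, Hq |- *.
  - split; auto. apply (dV_eq Rc A s u); auto.
  - destruct Hq as [[Hy _] _]. split; auto. rewrite (dV_eq Rc A s u); auto.
  - destruct Hp as [[Hx [Ha Hxa]] Hmu]. split.
    + split; [split; [auto | split; [auto | rewrite <- mmulA; auto]] | exact Hmu].
    + rewrite <- mmulA, (dV_eq Rc A s u); auto.
  - destruct Hp as [[Hx [Ha Hxa]] Hmu]. destruct Hq as [[Hy _] _]. split.
    + split; [split; [auto | split; [auto | rewrite <- mmulA; auto]] | exact Hmu].
    + destruct (excluded_middle_informative (s ** x = s ** y /\ a = b /\ mu <= nu)) as [C1|C1];
      destruct (excluded_middle_informative (x = y /\ a = b /\ mu <= nu)) as [C2|C2].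
      * reflexivity.
      * exfalso. apply C2. destruct C1 as [E C]. split; auto.
      * exfalso. apply C1. destruct C2 as [E C]. rewrite E. split; auto.
      * rewrite <- mmulA, (dV_eq Rc A s u); auto.
Qed.

Fixpoint reach {M : monoid} (A : list M) (v : M) (n : nat) : list M :=
  match n with
  | O => v :: nil
  | S n' => v :: flat_map (fun a => reach A (v ** a) n') A
  end.

Lemma reach_walk {M : monoid} Rc (A : list M) v y n :
  walk M Rc A v y n -> forall N, (n <= N)%nat -> In y (reach A v N).
Proof.
  intros W. induction W as [x Hx | x a y n [Hx [Ha Hxa]] W IH]; intros N HN.
  - destruct N; simpl; auto.
  - destruct N as [|N]; [lia|]. simpl. right. apply in_flat_map. exists a. split; auto. apply IH. lia.
Qed.

Lemma dV_le_walk {M : monoid} Rc (A : list M) x y n :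
  walk M Rc A x y n -> Rbar_le (dV M Rc A x y) (Finite (INR n)).
Proof.
  intros W. unfold dV.
  destruct (Glb_Rbar_correct (fun r => exists n, walk M Rc A x y n /\ r = INR n)) as [Hlb _].
  apply Hlb. exists n; auto.
Qed.

Lemma dV_small {M : monoid} Rc (A : list M) x y r N :
  Rbar_le (dV M Rc A x y) (Finite r) -> r < INR N -> exists n, (n < N)%nat /\ walk M Rc A x y n.
Proof.
  intros Hle Hr. destruct (classic (exists n, (n < N)%nat /\ walk M Rc A x y n)) as [E|E]; auto.
  exfalso. unfold dV in Hle.
  destruct (Glb_Rbar_correct (fun r => exists n, walk M Rc A x y n /\ r = INR n)) as [_ Hg].
  assert (Hb : Rbar_le (Finite (INR N)) (Glb_Rbar (fun r => exists n, walk M Rc A x y n /\ r = INR n))).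
  { apply Hg. intros z [n [W ->]]. simpl. apply le_INR.
    destruct (Nat.lt_ge_cases n N); auto. exfalso; apply E; eauto. }
  pose proof (Rbar_le_trans _ _ _ Hb Hle) as HH. simpl in HH. lra.
Qed.

Lemma Rbar_plus_le_r (d : Rbar) (c r : R) :
  0 <= c -> Rbar_le (Rbar_plus d (Finite c)) (Finite r) -> Rbar_le d (Finite r).
Proof. intros Hc. destruct d as [d| |]; simpl; intros; try lra; auto. Qed.

Lemma Rbar_plus_le_l (d : Rbar) (c r : R) :
  0 <= c -> Rbar_le (Rbar_plus (Finite c) d) (Finite r) -> Rbar_le d (Finite r).
Proof. intros Hc. destruct d as [d| |]; simpl; intros; try lra; auto. Qed.

Lemma exists_N (r : R) : 0 <= r -> exists N, r < INR N.
Proof.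
  intros Hr. destruct (archimed r) as [H1 _]. exists (Z.to_nat (up r)).
  rewrite INR_IZR_INZ, Z2Nat.id; [lra|]. apply le_IZR. lra.
Qed.

Definition src {M : monoid} (p : point M) : M :=
  match p with Vert x => x | Mid x _ _ => x end.
Definition tgt {M : monoid} (p : point M) : M :=
  match p with Vert x => x | Mid x a _ => x ** a end.

Lemma src_act {M : monoid} (s : M) (p : point M) : src (act M s p) = s ** src p.
Proof. destruct p; reflexivity. Qed.

Lemma ball_src {M : monoid} Rc (A : list M) (x0 q : point M) r N :
  in_space M Rc A x0 -> out_ball M Rc A x0 r q -> r < INR N ->
  In (src q) (src x0 :: reach A (tgt x0) N).
Proof.
  intros H0 [Hq Hd] HN. destruct x0 as [v | x a mu]; destruct q as [y | y b nu]; simpl in *.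
  - destruct (dV_small _ _ _ _ _ _ Hd HN) as [n [Hn W]]. right. eapply reach_walk; eauto. lia.
  - destruct Hq as [_ [Hnu _]]. apply Rbar_plus_le_r in Hd; [|lra].
    destruct (dV_small _ _ _ _ _ _ Hd HN) as [n [Hn W]]. right. eapply reach_walk; eauto. lia.
  - destruct H0 as [_ [_ Hmu]]. apply Rbar_plus_le_l in Hd; [|lra].
    destruct (dV_small _ _ _ _ _ _ Hd HN) as [n [Hn W]]. right. eapply reach_walk; eauto. lia.
  - destruct H0 as [_ [_ Hmu]]. destruct Hq as [_ [Hnu _]].
    destruct (excluded_middle_informative (x = y /\ a = b /\ mu <= nu)) as [C|C].
    + left. destruct C as [-> _]. reflexivity.
    + apply Rbar_plus_le_r in Hd; [|lra].
      destruct (dV_small _ _ _ _ _ _ Hd HN) as [n [Hn W]]. right. eapply reach_walk; eauto. lia.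
Qed.

Lemma sigma_of {M : monoid} (H Rc : M -> Prop) (h w s t : M) :
  (forall x, H x <-> Hrel M x h) -> (forall x, Rc x <-> Rrel M x h) ->
  Rc w -> t ** w = s ** w -> Defs.sigma M H s t.
Proof.
  intros HH HR Hw E h' Hh'. apply HH in Hh'. destruct Hh' as [Hh'R _].
  apply HR in Hw. assert (Hr : Rrel M h' w) by (eapply Rrel_trans; [exact Hh'R| apply Rrel_sym; exact Hw]).
  apply Rrel_fact in Hr. destruct Hr as [[m ->] _].
  rewrite !mmulA, E. reflexivity.
Qed.

Lemma outward_part {M : monoid} (A : list M) (H Rc : M -> Prop) (h : M) :
  (forall x, H x <-> Hrel M x h) -> (forall x, Rc x <-> Rrel M x h) -> outward_proper M Rc A H.
Proof.
  intros HH HR x0 r H0 Hr.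
  destruct (exists_N r Hr) as [N HN].
  set (F := src x0 :: reach A (tgt x0) N).
  set (pick := fun w w' : M =>
     match excluded_middle_informative (exists t, Stab M H t /\ t ** w = w') with
     | left E => proj1_sig (constructive_indefinite_description _ E) :: nil
     | right _ => nil end).
  exists (flat_map (fun w => flat_map (fun w' => pick w w') F) F). split.
  - intros t Ht. apply in_flat_map in Ht. destruct Ht as [w [_ Ht]].
    apply in_flat_map in Ht. destruct Ht as [w' [_ Ht]].
    unfold pick in Ht. destruct (excluded_middle_informative _) as [E|E]; [|destruct Ht].
    destruct Ht as [Ht|[]]. subst t.
    destruct (proj2_sig (constructive_indefinite_description _ E)); auto.
  - intros s Hs [q [Bq Bsq]].
    pose proof (ball_src Rc A x0 q r N H0 Bq HN) as Fw.
    pose proof (ball_src Rc A x0 (act M s q) r N H0 Bsq HN) as Fw'.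
    rewrite src_act in Fw'.
    assert (Hw : Rc (src q)) by (destruct Bq as [Hq _]; destruct q; simpl in *; unfold edge in *; tauto).
    assert (Hp : exists t, In t (pick (src q) (s ** src q)) /\ t ** src q = s ** src q).
    { unfold pick. destruct (excluded_middle_informative _) as [E|E].
      - destruct (constructive_indefinite_description _ E) as [t [Ht Htw]]. simpl.
        exists t. auto.
      - exfalso. apply E. eauto. }
    destruct Hp as [t [Ht Htw]]. exists t. split.
    + apply in_flat_map. exists (src q). split; [exact Fw|].
      apply in_flat_map. exists (s ** src q). split; [exact Fw'| exact Ht].
    + eapply sigma_of; eauto.
Qed.

Lemma maps_H {M : monoid} (H Rc : M -> Prop) (h x y p : M) :
  (forall x, H x <-> Hrel M x h) -> (forall x, Rc x <-> Rrel M x h) ->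
  Hrel M x y -> Rc y -> x = p ** y -> forall h', H h' -> H (p ** h').
Proof.
  intros HH HR [HxyR HxyL] Hy Ex h' Hh'.
  apply HH in Hh'. destruct Hh' as [Hh'R Hh'L].
  apply HR in Hy.
  assert (Hr : Rrel M h' y) by (eapply Rrel_trans; [exact Hh'R| apply Rrel_sym; exact Hy]).
  apply Rrel_fact in Hr. destruct Hr as [[n En] [n' En']].
  assert (Epx : p ** h' = x ** n) by (rewrite En, mmulA, <- Ex; reflexivity).
  apply HH. rewrite Epx. split.
  - eapply Rrel_trans; [| eapply Rrel_trans; [exact HxyR | exact Hy]].
    apply Rrel_fact. split.
    + exists n. reflexivity.
    + exists n'. transitivity (p ** y); [exact Ex|]. rewrite En' at 1. rewrite En, !mmulA, <- Ex. reflexivity.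
  - eapply Lrel_trans; [apply Lrel_rcong; exact HxyL|]. rewrite <- En. exact Hh'L.
Qed.

Lemma transit {M : monoid} (H Rc : M -> Prop) (h x y : M) :
  (forall x, H x <-> Hrel M x h) -> (forall x, Rc x <-> Rrel M x h) ->
  Hrel M x y -> Rc y -> exists s, Stab M H s /\ x = s ** y.
Proof.
  intros HH HR Hxy Hy.
  assert (Hx : Rc x) by (apply HR; eapply Rrel_trans; [apply Hxy | apply HR; exact Hy]).
  assert (Hyx : Hrel M y x) by (destruct Hxy; split; [apply Rrel_sym | apply Lrel_sym]; auto).
  pose proof (proj2 Hxy) as HL. apply Lrel_fact in HL. destruct HL as [[p Ep] [p' Ep']].
  exists p. split; [| exact Ep].
  intro z. split.
  - intros [h' [Hh' ->]]. exact (maps_H H Rc h x y p HH HR Hxy Hy Ep h' Hh').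
  - intros Hz. exists (p' ** z). split.
    + eapply maps_H; [exact HH | exact HR | exact Hyx | exact Hx | exact Ep' | exact Hz].
    + assert (Hzx : Rrel M z x).
      { apply HH in Hz. eapply Rrel_trans; [apply Hz | apply Rrel_sym; apply HR; exact Hx]. }
      apply Rrel_fact in Hzx. destruct Hzx as [[n En] _].
      rewrite En, (mmulA _ p' x n), <- Ep', mmulA, <- Ep. reflexivity.
Qed.

Lemma cc_to_fin {M : monoid} (A : list M) (H Rc : M -> Prop) (h : M) :
  (forall x, H x <-> Hrel M x h) -> (forall x, Rc x <-> Rrel M x h) ->
  cocompact M Rc A H -> finitely_many_Hclasses M Rc.
Proof.
  intros HH HR [x0 [r [H0 [Hr Hcov]]]].
  destruct (exists_N r Hr) as [N HN].
  exists (filter (fun y => if excluded_middle_informative (Rc y) then true else false)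
            (src x0 :: reach A (tgt x0) N)).
  split.
  - intros y Hy. apply filter_In in Hy. destruct Hy as [_ Hy].
    destruct (excluded_middle_informative (Rc y)); [auto|discriminate].
  - intros x Hx. destruct (Hcov (Vert _ x) Hx) as [s [Hs [q [[Bq _] Eq]]]].
    destruct q as [y | y b nu]; simpl in Eq; [|discriminate]. injection Eq as Exy.
    destruct (Stab_props H Rc h s HH HR Hs) as [u [Hsr [Hur [_ [Hus _]]]]].
    assert (Hy : Rc y) by (destruct Bq as [Hq _]; exact Hq).
    exists y. split.
    + apply filter_In. split.
      * apply (ball_src Rc A x0 (Vert _ y) r N H0 Bq HN).
      * destruct (excluded_middle_informative (Rc y)); [reflexivity | contradiction].
    + split.
      * eapply Rrel_trans; [apply HR; exact Hx | apply Rrel_sym; apply HR; exact Hy].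
      * apply Lrel_fact. split; [exists s; exact Exy | exists u; rewrite Exy, Hus; auto].
Qed.

Lemma list_bound {T : Type} (Q : T -> nat -> Prop) :
  (forall y N N', (N <= N')%nat -> Q y N -> Q y N') ->
  forall L, (forall y, In y L -> exists N, Q y N) -> exists N, forall y, In y L -> Q y N.
Proof.
  intros Hmono L. induction L as [|y L IH]; intros HL.
  - exists O. intros _ [].
  - destruct (HL y (or_introl eq_refl)) as [N1 H1].
    destruct IH as [N2 H2]. { intros z Hz. apply HL. right. exact Hz. }
    exists (Nat.max N1 N2). intros z [<-|Hz].
    + apply Hmono with N1; [lia|auto].
    + apply Hmono with N2; [lia|auto].
Qed.

Lemma walk_fold {M : monoid} (A : list M) (Rc : M -> Prop) (h : M) :
  (forall x, Rc x <-> Rrel M x h) ->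
  forall l, (forall a, In a l -> In a A) -> forall x, Rc x ->
  Rrel M (x ** fold_right (mmul M) (mone M) l) x ->
  walk M Rc A x (x ** fold_right (mmul M) (mone M) l) (length l).
Proof.
  intros HR l. induction l as [|a l IH]; intros Hl x Hx Hrel; simpl in *.
  - rewrite mmulm1. constructor. exact Hx.
  - set (f := fold_right (mmul M) (mone M) l) in *.
    assert (Hxa : Rrel M (x ** a) x).
    { apply Rrel_fact in Hrel. destruct Hrel as [_ [m Em]].
      apply Rrel_fact. split; [exists a; reflexivity|].
      exists (f ** m). rewrite Em at 1. rewrite !mmulA. reflexivity. }
    assert (Rxa : Rc (x ** a)) by (apply HR; eapply Rrel_trans; [exact Hxa | apply HR; exact Hx]).
    apply walkS with a.
    + split; [exact Hx | split; [apply Hl; left; reflexivity | exact Rxa]].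
    + rewrite mmulA. apply IH; auto.
      rewrite <- mmulA. eapply Rrel_trans; [exact Hrel | apply Rrel_sym; exact Hxa].
Qed.

Lemma connected {M : monoid} (A : list M) (Rc : M -> Prop) (h : M) :
  generated_by M A -> (forall x, Rc x <-> Rrel M x h) ->
  forall x y, Rc x -> Rc y -> exists n, walk M Rc A x y n.
Proof.
  intros Hgen HR x y Hx Hy.
  assert (Hyx : Rrel M y x) by (eapply Rrel_trans; [apply HR; exact Hy | apply Rrel_sym; apply HR; exact Hx]).
  pose proof Hyx as E. apply Rrel_fact in E. destruct E as [[m Em] _].
  destruct (Hgen m) as [l [Hl Eml]].
  exists (length l). rewrite Em, Eml. apply walk_fold with h; auto.
  rewrite <- Eml, <- Em. exact Hyx.
Qed.

Lemma dV_le_N {M : monoid} Rc (A : list M) x y n N :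
  walk M Rc A x y n -> (n <= N)%nat -> Rbar_le (dV M Rc A x y) (Finite (INR N)).
Proof.
  intros W Hn. eapply Rbar_le_trans; [apply dV_le_walk; exact W|]. simpl. apply le_INR. exact Hn.
Qed.

Lemma Rbar_plus_bound_r (d : Rbar) (a c : R) :
  Rbar_le d (Finite a) -> Rbar_le (Rbar_plus d (Finite c)) (Finite (a + c)).
Proof. destruct d as [d| |]; simpl; intros; try lra; auto. Qed.
Lemma Rbar_plus_bound_l (d : Rbar) (a c : R) :
  Rbar_le d (Finite a) -> Rbar_le (Rbar_plus (Finite c) d) (Finite (c + a)).
Proof. destruct d as [d| |]; simpl; intros; try lra; auto. Qed.

Lemma fin_to_cc {M : monoid} (A : list M) (H Rc : M -> Prop) (h : M) :
  generated_by M A ->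
  (forall x, H x <-> Hrel M x h) -> (forall x, Rc x <-> Rrel M x h) ->
  finitely_many_Hclasses M Rc -> cocompact M Rc A H.
Proof.
  intros Hgen HH HR [L [HL Hcov]].
  assert (Rch : Rc h) by (apply HR; apply Rrel_refl).
  set (Q := fun y N => (exists n, (n <= N)%nat /\ walk M Rc A h y n) /\
       (exists n, (n <= N)%nat /\ walk M Rc A y h n) /\
       (forall a, In a A -> Rc (y ** a) -> exists n, (n <= N)%nat /\ walk M Rc A (y ** a) h n)).
  destruct (list_bound Q) with (L := L) as [N HN].
  - intros y N N' HNN' [[n1 [H1 W1]] [[n2 [H2 W2]] H3]]. split; [|split].
    + exists n1; split; [lia|auto].
    + exists n2; split; [lia|auto].
    + intros a Ha Hya. destruct (H3 a Ha Hya) as [n3 [? ?]]. exists n3; split; [lia|auto].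
  - intros y Hy. pose proof (HL y Hy) as Ry.
    destruct (connected A Rc h Hgen HR h y Rch Ry) as [n1 W1].
    destruct (connected A Rc h Hgen HR y h Ry Rch) as [n2 W2].
    destruct (list_bound (fun a N => Rc (y ** a) -> exists n, (n <= N)%nat /\ walk M Rc A (y ** a) h n)) with (L := A) as [N3 H3].
    + intros a N N' HNN' Ha Hya. destruct (Ha Hya) as [n [? ?]]. exists n; split; [lia|auto].
    + intros a _. destruct (classic (Rc (y ** a))) as [Hya|Hya].
      * destruct (connected A Rc h Hgen HR (y ** a) h Hya Rch) as [n W].
        exists n. intros _. exists n; split; [lia|auto].
      * exists O. intros C; contradiction.
    + exists (Nat.max n1 (Nat.max n2 N3)). split; [|split].
      * exists n1; split; [lia|auto].
      * exists n2; split; [lia|auto].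
      * intros a Ha Hya. destruct (H3 a Ha Hya) as [n [? ?]]. exists n; split; [lia|auto].
  - exists (Vert _ h), (INR N + 1). split; [exact Rch|]. split; [pose proof (pos_INR N); lra|].
    intros p Hp.
    assert (Key : forall x, Rc x -> exists y s, In y L /\ Stab M H s /\ x = s ** y).
    { intros x Hx. destruct (Hcov x Hx) as [y [Hy Hxy]].
      destruct (transit H Rc h x y HH HR Hxy (HL y Hy)) as [s [Hs E]]. exists y, s; auto. }
    destruct p as [x | x a mu].
    + destruct (Key x Hp) as [y [s [Hy [Hs E]]]].
      destruct (HN y Hy) as [[n1 [H1 W1]] [[n2 [H2 W2]] _]].
      exists s. split; [exact Hs|]. exists (Vert _ y). split.
      * unfold strong_ball, out_ball, in_ball. simpl.
        pose proof (HL y Hy). split; split; auto;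
          (eapply Rbar_le_trans; [eapply dV_le_N; eauto | simpl; lra]).
      * simpl. rewrite E. reflexivity.
    + destruct Hp as [[Hx [Ha Hxa]] Hmu].
      destruct (Key x Hx) as [y [s [Hy [Hs E]]]].
      destruct (HN y Hy) as [[n1 [H1 W1]] [_ H3]].
      destruct (Stab_props H Rc h s HH HR Hs) as [u [Hsr [Hur [Hum _]]]].
      assert (Rya : Rc (y ** a)).
      { pose proof (HL y Hy) as Ry. apply HR in Ry. apply Rrel_fact in Ry. destruct Ry as [[m Em] _].
        assert (E2 : s ** (h ** (m ** a)) = x ** a)
          by (rewrite E, (mmulA _ h m a), <- Em, mmulA; reflexivity).
        assert (E3 : y ** a = u ** (x ** a))
          by (rewrite <- E2, Hum, Em, mmulA; reflexivity).
        rewrite E3. apply Hur. exact Hxa. }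
      destruct (H3 a Ha Rya) as [n3 [H3' W3]].
      exists s; split; [exact Hs|]. exists (Mid _ y a mu). split.
      * unfold strong_ball, out_ball, in_ball. simpl. split; split.
        -- split; [split; [apply HL; auto | split; auto] | exact Hmu].
        -- eapply Rbar_le_trans; [apply Rbar_plus_bound_r; eapply dV_le_N; eauto | simpl; lra].
        -- split; [split; [apply HL; auto | split; auto] | exact Hmu].
        -- eapply Rbar_le_trans; [apply Rbar_plus_bound_l; eapply dV_le_N; eauto | simpl; lra].
      * simpl. rewrite E. reflexivity.
Qed.

Theorem theorem5p1 (M : monoid) (A : list M) (H Rc : M -> Prop) :
  generated_by M A ->
  is_Hclass M H ->
  Rclass_containing M H Rc ->
  acts_by_isometries M Rc A H /\
  outward_proper M Rc A H /\
  (cocompact M Rc A H <-> finitely_many_Hclasses M Rc).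
Proof.
  intros Hgen [h0 HH0] [h [Hh HR]].
  assert (HH : forall x, H x <-> Hrel M x h).
  { apply HH0 in Hh. destruct Hh as [HhR HhL]. intro x. rewrite HH0. split.
    - intros [Hr Hl]. split.
      + eapply Rrel_trans; [exact Hr | apply Rrel_sym; exact HhR].
      + eapply Lrel_trans; [exact Hl | apply Lrel_sym; exact HhL].
    - intros [Hr Hl]. split.
      + eapply Rrel_trans; [exact Hr | exact HhR].
      + eapply Lrel_trans; [exact Hl | exact HhL]. }
  split; [eapply isometry_part; eauto|].
  split; [eapply outward_part; eauto|].
  split; [eapply cc_to_fin; eauto | eapply fin_to_cc; eauto].
Qed.
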